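(* Let $\mathbb{F}_q$ be a finite field and $\chi$ its canonical additive character. The eigenvalues (listed with multiplicity) of the adjacency matrix of the special unit-graph on $\operatorname{Mat}_2(\mathbb{F}_q)$ are: $\lambda = q^3 - q$ with multiplicity $1$; $\mu_0 = -q$ with multiplicity $q^3+q^2-q-1$; and, for each $\delta \in \mathbb{F}_q^{\ast}$, $\mu_\delta = q\sum_{\alpha \in \mathbb{F}_q^{\ast}} \chi(\alpha + \delta\alpha^{-1})$ with multiplicity $q^3 - q$.
   Context: The special unit-graph on $\operatorname{Mat}_2(\mathbb{F}_q)$ is the Cayley graph $\operatorname{Cay}(\operatorname{Mat}_2(\mathbb{F}_q), \operatorname{SL}_2(\mathbb{F}_q))$: vertex set $\operatorname{Mat}_2(\mathbb{F}_q)$, with $A$ adjacent to $B$ iff $\det(B-A)=1$ (this relation is symmetric for $2\times 2$ matrices). The canonical additive character of $\mathbb{F}_q$, where $q=p^m$ with $p$ prime, is $\chi(x) = \exp(2\pi i \operatorname{Tr}_{\mathbb{F}_q/\mathbb{F}_p}(x)/p)$. *)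

(* Defs.v *)
From HB Require Import structures.
From mathcomp Require Import all_boot all_order all_algebra all_field.
From mathcomp Require Import complex.
From mathcomp Require Import reals trigo.
Set Implicit Arguments. Unset Strict Implicit. Unset Printing Implicit Defensive.
Import Order.TTheory GRing.Theory Num.Theory.
Local Open Scope ring_scope.

Definition fchar (F : finFieldType) : nat := pdiv #|F|.
Definition fdeg (F : finFieldType) : nat := logn (fchar F) #|F|.

Definition abs_trace (F : finFieldType) (x : F) : F :=
  \sum_(i < fdeg F) x ^+ (fchar F ^ i).

(* The integer representative in {0,...,p-1} of an element of the prime
   subfield of F (0 if there is none, which never happens for traces). *)
Definition prime_field_rep (F : finFieldType) (t : F) : nat :=
  if [pick k : 'I_(fchar F) | (k%:R : F) == t] is Some k then val k else 0%N.

(* Canonical additive character chi(x) = exp(2 pi i Tr(x) / p), with values in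
   the complex numbers R[i] over a real field R; exp(i theta) = cos theta + i sin theta. *)
Definition can_add_char (R : realType) (F : finFieldType) (x : F) : R[i] :=
  let theta := (2 * pi * (prime_field_rep (abs_trace x))%:R / (fchar F)%:R : R) in
  Complex (cos theta) (sin theta).

Definition special_unit_adj (F : finFieldType) (A B : 'M[F]_2) : bool :=
  \det (B - A) == 1.

Definition special_unit_adjmx (R : realType) (F : finFieldType) :
    'M[R[i]]_(#|{: 'M[F]_2}|) :=
  \matrix_(i, j) (if special_unit_adj (enum_val i) (enum_val j) then 1 else 0).

Definition mu_delta (R : realType) (F : finFieldType) (d : F) : R[i] :=
  (#|F|)%:R * \sum_(a : F | a != 0) can_add_char R (a + d * a^-1).

(* Main.v *)
Require Import Defs.
From HB Require Import structures.
From mathcomp Require Import all_boot all_order all_algebra all_field.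
From mathcomp Require Import complex.
From mathcomp Require Import reals trigo.
From mathcomp Require Import ring lra.
Import Order.TTheory GRing.Theory Num.Theory.
Local Open Scope ring_scope.
Set Implicit Arguments. Unset Strict Implicit. Unset Printing Implicit Defensive.
Section CharFacts.
Variable F : finFieldType.

Lemma fchar_facts : [/\ prime (fchar F), fchar F \in [char F] & #|F| = (fchar F ^ fdeg F)%N].
Proof.
have [p pp pc] := finPcharP F.
have hc := card_pprimeChar pc.
have e : #|F| = (p ^ logn p #|F|)%N by exact: hc.
have lg : (0 < logn p #|F|)%N.
  case: (logn p #|F|) e => // e0; have := finRing_gt1 F; rewrite e0 expn0 //.
have fp : fchar F = p.
  rewrite /fchar e; case: (logn p #|F|) lg => // k _; exact: pdiv_pfactor.
rewrite /fdeg fp; split => //.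
Qed.
End CharFacts.
Section Trace.
Variable F : finFieldType.
Local Notation p := (fchar F).
Local Notation m := (fdeg F).

Lemma pP : prime p. Proof. by case: (fchar_facts F). Qed.
Lemma pC : p \in [char F]. Proof. by case: (fchar_facts F). Qed.
Lemma cardF : #|F| = (p ^ m)%N. Proof. by case: (fchar_facts F). Qed.
Lemma m_gt0 : (0 < m)%N.
Proof.
case E: m => //; have := finRing_gt1 F; by rewrite cardF E expn0.
Qed.

Lemma exp_pi_add (x y : F) i : (x + y) ^+ (p ^ i) = x ^+ (p ^ i) + y ^+ (p ^ i).
Proof.
apply: exprDn_pchar; rewrite pnatX pnatE ?pC //; exact: pP.
Qed.

Lemma tr_add (x y : F) : abs_trace (x + y) = abs_trace x + abs_trace y.
Proof. by rewrite /abs_trace -big_split; apply: eq_bigr => i _; rewrite exp_pi_add. Qed.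

Lemma tr0 : abs_trace (0 : F) = 0.
Proof. by rewrite /abs_trace big1 // => i _; rewrite expr0n expn_eq0 (gtn_eqF (prime_gt0 pP)) andFb. Qed.

Lemma tr_frob (x : F) : abs_trace x ^+ p = abs_trace x.
Proof.
rewrite /abs_trace -(Frobenius_autE pC) rmorph_sum /=.
under eq_bigr => i _ do rewrite Frobenius_autE -exprM -expnSr.
move: m_gt0; case E: m => [//|k] _.
rewrite big_ord_recr big_ord_recl /= -E -cardF expf_card addrC; congr (_ + _).
Qed.

Lemma natr_inj_p (a b : nat) : (a < p)%N -> (b < p)%N -> (a%:R : F) = b%:R -> a = b.
Proof.
wlog ab : a b / (a <= b)%N.
  move=> H ha hb e; case: (leqP a b) => h; first exact: H.
  by apply/esym/H => //; apply: ltnW.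
move=> ha hb e; have E := subnK ab.
have h0 : ((b - a)%:R : F) = 0.
  by apply: (addIr (a%:R)); rewrite -natrD E e add0r.
move/eqP: h0; rewrite -(dvdn_pcharf pC) => dv.
case: (posnP (b - a)) => [z|pos]; last have le := dvdn_leq pos dv.
  by apply/eqP; rewrite eqn_leq ab -subn_eq0 z.
have : (b - a < p)%N by apply: leq_ltn_trans (leq_subr _ _) hb.
by rewrite ltnNge le.
Qed.
End Trace.
Section Rep.
Variable F : finFieldType.
Local Notation p := (fchar F).

Lemma prime_field_ex (t : F) : t ^+ p = t -> exists k : 'I_p, (k%:R : F) == t.
Proof.
move=> tp; case: (boolP [exists k : 'I_p, (k%:R : F) == t]) => [/existsP //|/existsPn H]; exfalso.
pose rs := t :: [seq ((val k)%:R : F) | k <- enum 'I_p].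
have p1 : (1 < p)%N := prime_gt1 (pP F).
have nz : ('X^p - 'X : {poly F}) != 0.
  by rewrite -size_poly_eq0 size_addl ?size_polyXn ?size_polyN ?size_polyX.
have rt : all (root ('X^p - 'X)) rs.
  apply/allP => x; rewrite inE => /orP [/eqP -> | /mapP [k _ ->]];
    rewrite rootE !hornerE ?tp ?subrr //.
  by rewrite -(Frobenius_autE (pC F)) Frobenius_aut_nat subrr.
have un : uniq rs.
  rewrite /= map_inj_uniq ?enum_uniq ?andbT.
    by apply/mapP => -[k _ e]; have := H k; rewrite e eqxx.
  by move=> a b /natr_inj_p e; apply: val_inj; apply: e.
have := max_poly_roots nz rt un.
by rewrite /= size_map size_enum_ord size_addl ?size_polyXn ?size_polyN ?size_polyX // ltnn.
Qed.

Lemma rep_spec (t : F) : t ^+ p = t -> (prime_field_rep t < p)%N /\ (prime_field_rep t)%:R = t.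
Proof.
move=> /prime_field_ex [k0 hk0]; rewrite /prime_field_rep.
case: pickP => [k /eqP hk | /(_ k0)]; last by rewrite hk0.
by split => //; apply: ltn_ord.
Qed.

Lemma rep_uniq (t : F) (k : nat) : t ^+ p = t -> (k < p)%N -> k%:R = t -> prime_field_rep t = k.
Proof.
move=> tp kp e; have [h1 h2] := rep_spec tp.
by apply: (@natr_inj_p F) => //; rewrite h2.
Qed.
End Rep.
Section Chi.
Variable R : realType.
Variable F : finFieldType.
Local Notation p := (fchar F).
Local Notation C := (R[i]).
Local Notation chi := (can_add_char R (F:=F)).

Definition ang (k : nat) : R := 2 * pi * k%:R / p%:R.
Definition ee (k : nat) : C := Complex (cos (ang k)) (sin (ang k)).

Lemma chiE (x : F) : chi x = ee (prime_field_rep (abs_trace x)).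
Proof. by []. Qed.

Lemma ee_add a b : ee a * ee b = ee (a + b).
Proof.
rewrite /ee; have -> : ang (a + b) = ang a + ang b by rewrite /ang natrD; ring.
rewrite cosD sinD.
by congr Complex; rewrite addrC.
Qed.

Lemma cos_per (x : R) n : cos (x + (pi *+ 2) *+ n) = cos x.
Proof.
elim: n => [|n IH]; first by rewrite mulr0n addr0.
by rewrite mulrS addrCA addrC cosD2pi IH.
Qed.
Lemma sin_per (x : R) n : sin (x + (pi *+ 2) *+ n) = sin x.
Proof.
elim: n => [|n IH]; first by rewrite mulr0n addr0.
by rewrite mulrS addrCA addrC sinD2pi IH.
Qed.

Lemma p_neq0 : (p%:R : R) != 0.
Proof. by rewrite pnatr_eq0 -lt0n prime_gt0 // pP. Qed.

Lemma ang_mod k : ang k = ang (k %% p) + (pi *+ 2) *+ (k %/ p).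
Proof.
rewrite {1}(divn_eq k p) /ang natrD natrM -mulr_natr mulr2n.
by field; exact: p_neq0.
Qed.

Lemma ee_mod k : ee (k %% p) = ee k.
Proof. by rewrite /ee [ang k]ang_mod cos_per sin_per. Qed.

Lemma natr_modp (n : nat) : ((n %% p)%:R : F) = n%:R.
Proof.
by rewrite {2}(divn_eq n p) natrD natrM (pcharf0 (pC F)) mulr0 add0r.
Qed.

Lemma chiD (x y : F) : chi (x + y) = chi x * chi y.
Proof.
rewrite !chiE ee_add tr_add -(ee_mod (_ + _)); congr ee.
have hx := tr_frob x; have hy := tr_frob y.
have [h1 h2] := rep_spec hx; have [h3 h4] := rep_spec hy.
apply: rep_uniq.
- by rewrite -!tr_add tr_frob.
- by rewrite ltn_mod prime_gt0 // pP.
- by rewrite natr_modp natrD h2 h4.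
Qed.

Lemma chi0 : chi 0 = 1.
Proof.
rewrite chiE tr0 (@rep_uniq F 0 0) ?expr0n ?prime_gt0 ?(gtn_eqF (prime_gt0 (pP F))) ?pP //.
by rewrite /ee /ang mulr0 mul0r cos0 sin0.
Qed.
End Chi.
Section NonTriv.
Variable F : finFieldType.
Local Notation p := (fchar F).
Local Notation m := (fdeg F).

Lemma tr_nonzero : exists x : F, abs_trace x != 0.
Proof.
case: (boolP [exists x : F, abs_trace x != 0]) => [/existsP //|/existsPn H]; exfalso.
have p1 : (1 < p)%N := prime_gt1 (pP F).
have mg := m_gt0 F.
pose T : {poly F} := \sum_(i < m) 'X^(p ^ i).
have hT x : T.[x] = abs_trace x.
  by rewrite /T horner_sum; apply: eq_bigr => i _; rewrite hornerXn.
have [k E] : exists k, m = k.+1 by move: mg; case: m => // k _; exists k.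
have Tnz : T != 0.
  apply/eqP => /(congr1 (fun P : {poly F} => P`_(p ^ k))).
  rewrite coef0 /T coef_sum E (bigD1 ord_max) //= coefXn eqxx big1 ?addr0; first by move/eqP; rewrite oner_eq0.
  move=> i ne; rewrite coefXn; case: eqP => // /(expnI p1) e.
  by move: ne; rewrite -val_eqE /= -e eqxx.
have sz : (size T <= (p ^ k).+1)%N.
  apply: leq_trans (size_sum _ _ _) _; apply/bigmax_leqP => i _.
  by rewrite size_polyXn ltnS leq_exp2l // -ltnS -E ltn_ord.
have rt : all (root T) (enum F).
  by apply/allP => x _; rewrite rootE hT; move: (H x); rewrite negbK.
have := max_poly_roots Tnz rt (enum_uniq _).
rewrite -cardE cardF E => /leq_trans /(_ sz).
by rewrite ltnS leq_exp2l // ltnn.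
Qed.
End NonTriv.

Section NonTrivChi.
Variable R : realType.
Variable F : finFieldType.
Local Notation p := (fchar F).
Local Notation chi := (can_add_char R (F:=F)).

Lemma chi_nontriv : exists t : F, chi t != 1.
Proof.
have [x hx] := tr_nonzero F.
exists x; rewrite chiE.
have [h1 h2] := rep_spec (tr_frob x).
set k := prime_field_rep _ in h1 h2 *.
have k0 : (0 < k)%N.
  by rewrite lt0n; apply/eqP => k0; move: hx; rewrite -h2 k0 eqxx.
apply/eqP; rewrite /ee => -[] hc.
set a : R := pi * k%:R / p%:R.
have ha : ang R F k = a + a by rewrite /ang /a; ring.
have a0 : 0 < a < pi.
  have pp : (0 : R) < p%:R by rewrite ltr0n prime_gt0 // pP.
  apply/andP; split.
    by rewrite /a mulr_gt0 ?invr_gt0 // mulr_gt0 ?pi_gt0 // ltr0n.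
  rewrite /a ltr_pdivrMr // ltr_pM2l ?pi_gt0 // ltr_nat //.
have s0 := sin_gt0_pi a0.
move: hc; rewrite ha cosD -!expr2 cos2sin2 => hc.
nra.
Qed.
End NonTrivChi.
Section Mx22.
Variable F : finFieldType.

Definition mx22 (a b c d : F) : 'M[F]_2 :=
  \matrix_(i < 2, j < 2) if (i : nat) == 0%N then (if (j : nat) == 0%N then a else b)
                         else (if (j : nat) == 0%N then c else d).

Lemma ord2P (i : 'I_2) : i = 0 \/ i = 1.
Proof. by case: i => [[|[|//]]] hi; [left|right]; apply: val_inj. Qed.

Lemma mx22_eta (A : 'M[F]_2) : A = mx22 (A 0 0) (A 0 1) (A 1 0) (A 1 1).
Proof.
by apply/matrixP => i j; rewrite mxE; case: (ord2P i) => ->; case: (ord2P j) => ->.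
Qed.

Lemma mx22E a b c d : let M := mx22 a b c d in
  [/\ M 0 0 = a, M 0 1 = b, M 1 0 = c & M 1 1 = d].
Proof. by rewrite /mx22 !mxE. Qed.

Lemma det_mx22 a b c d : \det (mx22 a b c d) = a * d - b * c.
Proof.
rewrite (expand_det_row _ 0) !big_ord_recl big_ord0 addr0 /cofactor.
rewrite !det_mx11 !mxE /=.
by rewrite /bump /= expr0 expr1 mul1r mulN1r mulrN.
Qed.

Lemma sum_mx22 (V : nmodType) (f : 'M[F]_2 -> V) :
  \sum_A f A = \sum_a \sum_b \sum_c \sum_d f (mx22 a b c d).
Proof.
pose h (t : (F * F) * (F * F)) := mx22 t.1.1 t.1.2 t.2.1 t.2.2.
pose g (A : 'M[F]_2) := ((A 0 0, A 0 1), (A 1 0, A 1 1)).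
have hb : bijective h.
  exists g; first by move=> [[a b] [c d]]; rewrite /g /h /= !mxE.
  by move=> A; rewrite /g /h /= -mx22_eta.
rewrite (reindex h) /=; last by apply: onW_bij.
rewrite -(pair_big xpredT xpredT (fun ab cd => f (h (ab, cd)))) /=.
rewrite -(pair_big xpredT xpredT (fun a b => \sum_(cd : F * F) f (h ((a, b), cd)))) /=.
apply: eq_bigr => a _; apply: eq_bigr => b _.
rewrite -(pair_big xpredT xpredT (fun c d => f (h ((a, b), (c, d))))) /=.
by [].
Qed.
End Mx22.
Section Pair.
Variable R : realType.
Variable F : finFieldType.
Local Notation C := (R[i]).
Local Notation chi := (can_add_char R (F:=F)).
Local Notation q := (#|F|%:R : C).

Definition pr (B A : 'M[F]_2) : F := \sum_i \sum_j B i j * A i j.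

Lemma pr_mx22 B a b c d : pr B (mx22 a b c d) = B 0 0 * a + B 0 1 * b + B 1 0 * c + B 1 1 * d.
Proof.
rewrite /pr !big_ord_recl !big_ord0 !mxE /= !addr0 addrA.
have e0 : (ord0 : 'I_2) = 0 by apply: val_inj.
have e1 : lift ord0 (ord0 : 'I_1) = (1 : 'I_2) by apply: val_inj.
by rewrite e1 e0.
Qed.

Lemma prD B A1 A2 : pr B (A1 + A2) = pr B A1 + pr B A2.
Proof.
rewrite /pr -big_split; apply: eq_bigr => i _; rewrite -big_split; apply: eq_bigr => j _.
by rewrite mxE mulrDr.
Qed.

Lemma prN B A : pr B (- A) = - pr B A.
Proof.
rewrite /pr -sumrN; apply: eq_bigr => i _; rewrite -sumrN; apply: eq_bigr => j _.
by rewrite mxE mulrN.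
Qed.

Lemma pr0 A : pr 0 A = 0.
Proof. by rewrite /pr big1 // => i _; rewrite big1 // => j _; rewrite mxE mul0r. Qed.

Lemma prC B A : pr B A = pr A B.
Proof. by rewrite /pr; apply: eq_bigr => i _; apply: eq_bigr => j _; rewrite mulrC. Qed.

Lemma pr_mul (g B s : 'M[F]_2) : pr (g *m B) s = pr B (g^T *m s).
Proof.
rewrite /pr.
under eq_bigr do under eq_bigr do rewrite mxE big_distrl /=.
under [RHS]eq_bigr do under eq_bigr do rewrite mxE big_distrr /=.
under eq_bigr do rewrite exchange_big /=.
rewrite exchange_big /=.
under eq_bigr do rewrite exchange_big /=.
apply: eq_bigr => k _; apply: eq_bigr => j _; apply: eq_bigr => i _.
by rewrite mxE; ring.
Qed.

Lemma chiN (x : F) : chi (- x) * chi x = 1.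
Proof. by rewrite -chiD addNr chi0. Qed.

Lemma chi_sum_shift (t : F) : \sum_(x : F) chi x = chi t * \sum_(x : F) chi x.
Proof.
rewrite {1}(reindex_inj (addrI t)) /= mulr_sumr.
by apply: eq_bigr => x _; rewrite chiD.
Qed.

Lemma sum_chi : \sum_(x : F) chi x = 0.
Proof.
have [t ht] := chi_nontriv R F.
have := chi_sum_shift t; move/eqP; rewrite -subr_eq0 -{1}[\sum_x _]mul1r -mulrBl mulf_eq0.
by rewrite subr_eq0 eq_sym (negbTE ht) /= => /eqP.
Qed.

Lemma sum_chi_mul (u : F) : u != 0 -> \sum_(x : F) chi (u * x) = 0.
Proof.
move=> u0; transitivity (\sum_(x : F) chi x); last exact: sum_chi.
rewrite [RHS](reindex_inj (mulfI u0)) /=.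
by [].
Qed.

Lemma sum_chi_mul_gen (u : F) : \sum_(x : F) chi (u * x) = if u == 0 then q else 0.
Proof.
case: eqP => [->|/eqP u0]; last exact: sum_chi_mul.
by under eq_bigr do rewrite mul0r chi0; rewrite sumr_const.
Qed.

Lemma sum_chi_mulr (u : F) : \sum_(x : F) chi (x * u) = if u == 0 then q else 0.
Proof. by under eq_bigr do rewrite mulrC; rewrite sum_chi_mul_gen. Qed.

Lemma sum4_prod (f1 f2 f3 f4 : F -> C) :
  \sum_a \sum_b \sum_c \sum_d (f1 a * f2 b * f3 c * f4 d) =
  (\sum_a f1 a) * (\sum_b f2 b) * (\sum_c f3 c) * (\sum_d f4 d).
Proof.
under eq_bigr => a _ do under eq_bigr => b _ do under eq_bigr => c _ do rewrite -mulr_sumr.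
under eq_bigr => a _ do under eq_bigr => b _ do rewrite -mulr_suml.
under eq_bigr => a _ do rewrite -mulr_suml.
rewrite -mulr_suml; congr (_ * _).
under eq_bigr => a _ do under eq_bigr => b _ do rewrite -mulr_sumr.
under eq_bigr => a _ do rewrite -mulr_suml.
rewrite -mulr_suml; congr (_ * _).
under eq_bigr => a _ do rewrite -mulr_sumr.
by rewrite -mulr_suml.
Qed.

Lemma sum_chi_pr (z : 'M[F]_2) : z != 0 -> \sum_B chi (pr B z) = 0.
Proof.
move=> z0; rewrite sum_mx22.
under eq_bigr => a _ do under eq_bigr => b _ do under eq_bigr => c _ do
  under eq_bigr => d _ do rewrite prC pr_mx22 !chiD.
rewrite sum4_prod !sum_chi_mul_gen.
have : ~~ [&& z 0 0 == 0, z 0 1 == 0, z 1 0 == 0 & z 1 1 == 0].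
  apply: contra z0 => /and4P [/eqP h1 /eqP h2 /eqP h3 /eqP h4].
  by rewrite [z]mx22_eta h1 h2 h3 h4; apply/eqP/matrixP => i j; rewrite !mxE; do 2!case: ifP.
by case: eqP; case: eqP; case: eqP; case: eqP => //= *; rewrite ?mulr0 ?mul0r.
Qed.
End Pair.
Section Eigen.
Variable R : realType.
Variable F : finFieldType.
Local Notation C := (R[i]).
Local Notation chi := (can_add_char R (F:=F)).
Local Notation q := (#|F|%:R : C).

Definition L (B : 'M[F]_2) : C := \sum_(s : 'M[F]_2 | \det s == 1) chi (pr B s).

Lemma L_mul (g B : 'M[F]_2) : \det g = 1 -> L (g *m B) = L B.
Proof.
move=> dg; rewrite /L.
under eq_bigr do rewrite pr_mul.
have gu : g^T \in unitmx by rewrite unitmxE det_tr dg unitr1.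
rewrite [RHS](reindex_inj (can_inj (mulKmx gu))) /=.
by apply: eq_bigl => s; rewrite det_mulmx det_tr dg mul1r.
Qed.

Lemma L4 (B : 'M[F]_2) : L B = \sum_a \sum_b \sum_c \sum_d
   (if a * d - b * c == 1 then chi (B 0 0 * a + B 0 1 * b + B 1 0 * c + B 1 1 * d) else 0).
Proof.
rewrite /L big_mkcond sum_mx22.
do 4!(apply: eq_bigr => ? _).
by rewrite det_mx22 pr_mx22.
Qed.

Lemma sum_solve (a e k : F) (h : F -> C) : a != 0 ->
  \sum_d (if a * d - e == k then h d else 0) = h ((k + e) / a).
Proof.
move=> a0; rewrite -big_mkcond /= (eq_bigl (fun d => d == (k + e) / a)) ?big_pred1_eq //.
move=> d /=; apply/eqP/eqP => [<-|->]; first by field.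
by field.
Qed.

Lemma sum_delta (f : F -> C) (x : F) : \sum_a (if a == x then f a else 0) = f x.
Proof. by rewrite -big_mkcond big_pred1_eq. Qed.

Lemma sum2_delta (f : F -> F -> C) :
  \sum_a \sum_b (if (a == 0) && (b == 0) then f a b else 0) = f 0 0.
Proof.
rewrite (eq_bigr (fun a => if a == 0 then f a 0 else 0)) ?sum_delta //.
move=> a _; case: eqP => _ /=; first exact: sum_delta.
by rewrite big1.
Qed.

Lemma Kc (a b k : F) : \sum_c \sum_d (if a * d - b * c == k then (1 : C) else 0) =
  if (a == 0) && (b == 0) then (if k == 0 then q * q else 0) else q.
Proof.
case: (eqVneq a 0) => [->|a0] /=; last first.
  under eq_bigr do rewrite sum_solve //.
  by rewrite sumr_const.
case: (eqVneq b 0) => [->|b0] /=.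
  under eq_bigr do under eq_bigr do rewrite !mul0r subrr eq_sym.
  case: eqP => _; last by rewrite big1 // => c _; rewrite big1.
  by rewrite !sumr_const mulr_natr.
under eq_bigr do under eq_bigr do rewrite mul0r sub0r.
rewrite (eq_bigr (fun c => if c == - k / b then q else 0)).
  by rewrite sum_delta.
move=> c _; have -> : (- (b * c) == k) = (c == - k / b).
  by apply/eqP/eqP => [<-|->]; field.
by case: eqP => _; [rewrite sumr_const | rewrite big1].
Qed.
End Eigen.
Section Eigen2.
Variable R : realType.
Variable F : finFieldType.
Local Notation C := (R[i]).
Local Notation chi := (can_add_char R (F:=F)).
Local Notation q := (#|F|%:R : C).

Lemma sum_const_q (v : C) : \sum_(a : F) v = q * v.
Proof. by rewrite sumr_const mulr_natl. Qed.

Lemma L_row (x y : F) : L R (mx22 x y 0 0) = q * ((\sum_a chi (x * a)) * (\sum_b chi (y * b)) - 1).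
Proof.
rewrite L4 /mx22 !mxE /=.
have E1 : forall a b : F, \sum_c \sum_d
    (if a * d - b * c == 1 then chi (x * a + y * b + 0 * c + 0 * d) else 0) =
    chi (x * a) * chi (y * b) * q - (if (a == 0) && (b == 0) then chi (x * a + y * b) * q else 0).
  move=> a b.
  transitivity (chi (x * a + y * b) * \sum_c \sum_d (if a * d - b * c == 1 then (1 : C) else 0)).
    rewrite mulr_sumr; apply: eq_bigr => c _; rewrite mulr_sumr; apply: eq_bigr => d _.
    by rewrite !mul0r !addr0; case: ifP; rewrite ?mulr1 ?mulr0.
  by rewrite Kc oner_eq0 chiD; case: ifP => _; rewrite ?mulr0 ?subr0 ?subrr.
under eq_bigr do under eq_bigr do rewrite E1.
under eq_bigr do rewrite sumrB.
rewrite sumrB sum2_delta !mulr0 addr0 chi0 mul1r mulrBr mulr1; congr (_ - _).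
rewrite [RHS]mulrC mulr_suml mulr_suml; apply: eq_bigr => a _.
by rewrite mulr_sumr mulr_suml; apply: eq_bigr => b _.
Qed.

Lemma L_diag (dl : F) : dl != 0 -> L R (mx22 1 0 0 dl) = q * \sum_(a | a != 0) chi (a + dl * a^-1).
Proof.
move=> d0; rewrite L4 /mx22 !mxE /=.
rewrite mulr_sumr [RHS]big_mkcond; apply: eq_bigr => a _.
case: (eqVneq a 0) => [->|a0] /=.
  apply: big1 => b _; apply: big1 => c _.
  rewrite (eq_bigr (fun d => if - (b * c) == 1 then chi (dl * d) else 0)).
    by case: eqP => _; [apply: sum_chi_mul | apply: big1].
  by move=> d _; rewrite mulr0 !mul0r sub0r !add0r.
under eq_bigr do under eq_bigr do rewrite sum_solve //.
transitivity (\sum_(b : F) \sum_(c : F) chi (a + dl * a^-1) * chi (dl * b / a * c)).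
  apply: eq_bigr => b _; apply: eq_bigr => c _; rewrite -chiD; congr chi.
  by rewrite !mul0r !addr0 mul1r; field.
under eq_bigr do rewrite -mulr_sumr sum_chi_mul_gen.
rewrite -mulr_sumr [RHS]mulrC; congr (_ * _).
rewrite (eq_bigr (fun b => if b == 0 then q else 0)) ?sum_delta //.
move=> b _; rewrite !mulf_eq0 invr_eq0 (negbTE d0) (negbTE a0) /= orbF.
by case: ifP.
Qed.

Lemma Ncount (k : F) : \sum_(B : 'M[F]_2 | \det B == k) (1 : C) =
   q * q * q - q + (if k == 0 then q * q else 0).
Proof.
rewrite big_mkcond sum_mx22.
transitivity (\sum_(a : F) \sum_(b : F) (q + (if (a == 0) && (b == 0) then (if k == 0 then q * q else 0) - q else 0))).
  apply: eq_bigr => a _; apply: eq_bigr => b _.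
  rewrite (eq_bigr (fun c => \sum_d (if a * d - b * c == k then (1 : C) else 0))).
    by rewrite Kc; case: ifP => _; rewrite ?addr0 // addrC subrK.
  by move=> c _; apply: eq_bigr => d _; rewrite det_mx22.
under eq_bigr do rewrite big_split /=.
rewrite big_split /= sum2_delta /= !sum_const_q.
by case: ifP => _; ring.
Qed.
End Eigen2.
Section Reduce.
Variable R : realType.
Variable F : finFieldType.
Local Notation C := (R[i]).
Local Notation chi := (can_add_char R (F:=F)).
Local Notation q := (#|F|%:R : C).

Lemma mul_mx22 (a b c d a' b' c' d' : F) :
  mx22 a b c d *m mx22 a' b' c' d' =
  mx22 (a * a' + b * c') (a * b' + b * d') (c * a' + d * c') (c * b' + d * d').
Proof.
apply/matrixP => i j; rewrite !mxE !big_ord_recl big_ord0 addr0 !mxE /=.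
by case: (ord2P i) => ->; case: (ord2P j) => ->.
Qed.

Lemma mx22_1 : (1%:M : 'M[F]_2) = mx22 1 0 0 1.
Proof.
by apply/matrixP => i j; rewrite !mxE; case: (ord2P i) => ->; case: (ord2P j) => ->.
Qed.

Lemma L_det (B : 'M[F]_2) (dl : F) : \det B = dl -> dl != 0 -> L R B = L R (mx22 1 0 0 dl).
Proof.
move=> dB d0; pose g := B *m mx22 1 0 0 dl^-1.
have dg : \det g = 1 by rewrite det_mulmx det_mx22 dB mul1r !mulr0 subr0 divff.
have -> : B = g *m mx22 1 0 0 dl.
  rewrite -mulmxA mul_mx22 !mul1r !mul0r !mulr0 !addr0 !add0r mulVf // -mx22_1.
  by rewrite mulmx1.
exact: L_mul.
Qed.

Lemma L_row0 (x y : F) : ((x != 0) || (y != 0)) -> L R (mx22 x y 0 0) = - q.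
Proof.
move=> h; rewrite L_row !sum_chi_mul_gen.
by case: eqP h => _; case: eqP => _ //= _; rewrite ?mulr0 ?mul0r sub0r mulrN1.
Qed.

Lemma L_rank1 (B : 'M[F]_2) : \det B = 0 -> B != 0 -> L R B = - q.
Proof.
rewrite [B]mx22_eta det_mx22; set x := B 0 0; set y := B 0 1; set z := B 1 0; set w := B 1 1.
move=> dB B0.
case: (eqVneq x 0) => [x0|x0].
  case: (eqVneq y 0) => [y0|y0].
    pose g : 'M[F]_2 := mx22 0 1 (-1) 0.
    have dg : \det g = 1 by rewrite det_mx22; ring.
    rewrite -(@L_mul R F g (mx22 _ _ _ _) dg) mul_mx22.
    rewrite (_ : mx22 _ _ _ _ = mx22 z w 0 0); last by congr mx22; rewrite ?x0 ?y0; ring.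
    apply: L_row0; apply: contraNT B0; rewrite negb_or !negbK => /andP [/eqP z0 /eqP w0].
    rewrite x0 y0 z0 w0; apply/eqP/matrixP => i j; rewrite !mxE.
    by case: (ord2P i) => ->; case: (ord2P j) => ->.
  pose g : 'M[F]_2 := mx22 1 0 (- w / y) 1.
  have dg : \det g = 1 by rewrite det_mx22; ring.
  have z0 : z = 0.
    by move/eqP: dB; rewrite x0 mul0r sub0r oppr_eq0 mulf_eq0 (negbTE y0) /= => /eqP.
  rewrite -(@L_mul R F g (mx22 _ _ _ _) dg) mul_mx22.
  rewrite (_ : mx22 _ _ _ _ = mx22 0 y 0 0); last by congr mx22; rewrite ?x0 ?z0; field.
  by apply: L_row0; rewrite y0 orbT.
pose g : 'M[F]_2 := mx22 1 0 (- z / x) 1.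
have dg : \det g = 1 by rewrite det_mx22; ring.
rewrite -(@L_mul R F g (mx22 _ _ _ _) dg) mul_mx22.
rewrite (_ : mx22 _ _ _ _ = mx22 x y 0 0); first by apply: L_row0; rewrite x0.
congr mx22; rewrite ?mul1r ?mul0r ?addr0 //; first by rewrite divfK // addNr.
apply: (mulfI x0); rewrite mulr0 -dB.
by field.
Qed.
End Reduce.
Lemma char_poly_similar (K : fieldType) n (A P D : 'M[K]_n) :
  \det P != 0 -> A *m P = P *m D -> char_poly A = char_poly D.
Proof.
move=> dP AP; pose Pp := map_mx (@polyC K) P.
have E : char_poly_mx A *m Pp = Pp *m char_poly_mx D.
  rewrite /char_poly_mx mulmxBl mulmxBr -map_mxM AP map_mxM.
  by rewrite scalar_mxC.
have := congr1 determinant E; rewrite !det_mulmx /Pp det_map_mx /=.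
rewrite [_ * char_poly _]mulrC => /mulIf; apply.
by rewrite polyC_eq0.
Qed.

Section Diag.
Variable R : realType.
Variable F : finFieldType.
Local Notation C := (R[i]).
Local Notation chi := (can_add_char R (F:=F)).
Local Notation G := ('M[F]_2).
Local Notation N := #|{: 'M[F]_2}|.
Local Notation ev := (@enum_val G (pred_of_simpl predT)).

Lemma sum_enum (f : G -> C) : \sum_(i < N) f (ev i) = \sum_(B : G) f B.
Proof. by rewrite -big_enum_val. Qed.

Lemma prod_enum (f : G -> {poly C}) : \prod_(i < N) f (ev i) = \prod_(B : G) f B.
Proof. by rewrite -big_enum_val. Qed.

Definition Pm : 'M[C]_N := \matrix_(x, b) chi (pr (ev b) (ev x)).
Definition Qm : 'M[C]_N := \matrix_(b, y) chi (- pr (ev b) (ev y)).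
Definition Dm : 'M[C]_N := diag_mx (\row_b L R (ev b)).

Lemma AP : special_unit_adjmx R F *m Pm = Pm *m Dm.
Proof.
apply/matrixP => x b; rewrite mul_mx_diag !mxE.
under eq_bigr do rewrite !mxE.
rewrite (sum_enum (fun Y => (if special_unit_adj (ev x) Y then 1 else 0) * chi (pr (ev b) Y))).
rewrite (reindex_inj (addrI (ev x))) /= /L mulr_sumr [RHS]big_mkcond.
apply: eq_bigr => s _; rewrite /special_unit_adj [ev x + s]addrC addrK prD chiD.
by case: ifP; rewrite ?mul1r ?mul0r // mulrC.
Qed.

Lemma PQ : Pm *m Qm = (N%:R : C)%:M.
Proof.
apply/matrixP => x y; rewrite !mxE.
under eq_bigr do rewrite !mxE -chiD -prN -prD prC.
rewrite (sum_enum (fun B => chi (pr (ev x - ev y) B))).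
case: (eqVneq x y) => [->|xy]; first by rewrite subrr; under eq_bigr do rewrite pr0 chi0; rewrite sumr_const.
under eq_bigr do rewrite prC.
rewrite sum_chi_pr ?mulr0n //.
by rewrite subr_eq0; apply: contra xy => /eqP /enum_val_inj ->.
Qed.

Lemma detP : \det Pm != 0.
Proof.
have := congr1 determinant PQ; rewrite det_mulmx det_scalar => e.
apply/negP => /eqP h; move: e; rewrite h mul0r => /esym/eqP.
by rewrite expf_eq0 pnatr_eq0; case: (N).
Qed.

Lemma char_adj : char_poly (special_unit_adjmx R F) = \prod_(B : G) ('X - (L R B)%:P).
Proof.
rewrite (char_poly_similar detP AP) char_poly_trig ?diag_mx_is_trig //.
transitivity (\prod_(i < N) ('X - (L R (ev i))%:P)).
  by apply: eq_bigr => i _; rewrite !mxE eqxx mulr1n.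
exact: (prod_enum (fun B => 'X - (L R B)%:P)).
Qed.
End Diag.
Section Main.
Variable R : realType.
Variable F : finFieldType.
Local Notation C := (R[i]).
Local Notation G := ('M[F]_2).
Local Notation q := (#|F|%:R : C).

Lemma prod_cond_const (T : finType) (P : pred T) (c : {poly C}) :
  \prod_(i | P i) c = c ^+ #|P|.
Proof. by rewrite -prodr_const; apply: eq_bigl => i; rewrite unfold_in. Qed.

Lemma card_as_sum (P : pred G) : (#|P|%:R : C) = \sum_(B | P B) 1.
Proof. by rewrite sumr_const; congr (_ *+ _); apply: eq_card => B; rewrite !unfold_in. Qed.

Lemma card_det (k : F) : k != 0 -> #|[pred B : G | \det B == k]| = (#|F| ^ 3 - #|F|)%N.
Proof.
move=> k0; apply/eqP; rewrite -(eqr_nat C) card_as_sum /= Ncount (negbTE k0) addr0.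
rewrite natrB ?natrX; last by rewrite -{1}(expn1 #|F|); apply: leq_pexp2l => //; apply: ltnW (finRing_gt1 F).
by apply/eqP; ring.
Qed.

Lemma card_det0 : #|[pred B : G | (\det B == 0) && (B != 0)]| = (#|F| ^ 3 + #|F| ^ 2 - #|F| - 1)%N.
Proof.
set X := #|_|.
have E : (X + (#|F| + 1) = #|F| ^ 3 + #|F| ^ 2)%N.
  apply/eqP; rewrite -(eqr_nat C) !natrD /X card_as_sum /=.
  have := Ncount R (0 : F); rewrite eqxx (bigD1 (0 : G)) /= ?det0 // => e.
  apply/eqP; rewrite (eq_bigl (fun B : G => (\det B == 0) && (B != 0))) //.
  by apply: (addrI 1); rewrite addrA e !natrX; ring.
by rewrite -subnDA -E addnK.
Qed.
End Main.
Unset Implicit Arguments.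
Lemma L0_val (R : realType) (F : finFieldType) :
  L R (0 : 'M[F]_2) = ((#|F| ^ 3 - #|F|)%N)%:R.
Proof.
rewrite /L; under eq_bigr do rewrite pr0 chi0.
rewrite Ncount oner_eq0 addr0 natrB ?natrX; last first.
  by rewrite -{1}(expn1 #|F|); apply: leq_pexp2l => //; apply: ltnW (finRing_gt1 F).
by ring.
Qed.

Theorem theorem3p12 (R : realType) (F : finFieldType) :
  let q := #|F| in
  char_poly (special_unit_adjmx R F) =
    ('X - ((q ^ 3 - q)%N)%:R%:P) ^+ 1
    * ('X - (- (q%:R : R[i]))%:P) ^+ (q ^ 3 + q ^ 2 - q - 1)
    * \prod_(d : F | d != 0) ('X - (mu_delta R d)%:P) ^+ (q ^ 3 - q).
Proof.
move=> q; rewrite char_adj.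
rewrite (partition_big (fun B : 'M[F]_2 => \det B) xpredT) //=.
rewrite (bigD1 (0 : F)) //=; congr (_ * _); last first.
  apply: eq_bigr => d d0.
  rewrite (eq_bigr (fun _ => 'X - (mu_delta R d)%:P)); last first.
    by move=> B /eqP dB; rewrite (L_det R dB d0) (L_diag R d0).
  by rewrite prod_cond_const card_det.
rewrite (bigD1 (0 : 'M[F]_2)) /= ?det0 // expr1 L0_val; congr (_ * _).
rewrite (eq_bigl (fun B : 'M[F]_2 => (\det B == 0) && (B != 0))) //.
rewrite (eq_bigr (fun _ => 'X - (- (q%:R : R[i]))%:P)); last first.
  by move=> B /andP [/eqP dB B0]; rewrite (L_rank1 R dB B0).
by rewrite prod_cond_const card_det0.
Qed.
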